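(* Let $\mathbf{A}_C\in\{0,1\}^{U\times N}$, $\mathcal{E}=\{(i,j): [\mathbf{A}_C]_{ij}=1\}$, $\mathbf{B}=\mathbf{A}_C^T\mathbf{A}_C$, and let $\mathbf{u}$ be a unit-norm eigenvector of $\mathbf{B}$ with nonnegative entries associated with $\lambda_{\max}(\mathbf{B})$. For $\mathcal{E}_{\mathcal{R}}\subseteq\mathcal{E}$ define $$f(\mathcal{E}_{\mathcal{R}})=2\sum_{(i,j)\in\mathcal{E}_{\mathcal{R}}}\mathbf{u}^T\mathbf{A}_C^T\mathbf{e}^U_i[\mathbf{u}]_j-\sum_{i=1}^{U}\ \sum_{j:(i,j)\in\mathcal{E}_{\mathcal{R}}}\ \sum_{s:(i,s)\in\mathcal{E}_{\mathcal{R}}}[\mathbf{u}]_j[\mathbf{u}]_s .$$ Then $f$ is a monotonic increasing set function: for all $\mathcal{E}_{\mathcal{R}1}\subseteq\mathcal{E}_{\mathcal{R}2}\subseteq\mathcal{E}$, $f(\mathcal{E}_{\mathcal{R}2})\ge f(\mathcal{E}_{\mathcal{R}1})$.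
   Context: $\mathbf{A}_C$ is the adjacency matrix of a bipartite user–host access graph with $U$ users and $N$ hosts; $\mathcal{E}$ is its edge set. $\mathbf{e}^U_i$ is the $U\times1$ canonical basis vector with $1$ in position $i$; $[\mathbf{u}]_j$ is the $j$-th entry of $\mathbf{u}$. *)

(* Defs.v *)
From mathcomp Require Import all_boot all_order all_algebra.
Set Implicit Arguments. Unset Strict Implicit. Unset Printing Implicit Defensive.
Import Order.TTheory GRing.Theory Num.Theory.
Local Open Scope ring_scope.

Section Defs.
Variables (R : realFieldType) (U N : nat).

Definition is01 (A : 'M[R]_(U, N)) : Prop := forall i j, A i j = 0 \/ A i j = 1.

Definition edges (A : 'M[R]_(U, N)) : {set 'I_U * 'I_N} :=
  [set ij | A ij.1 ij.2 == 1].

Definition ebasis (i : 'I_U) : 'cV[R]_U := delta_mx i 0.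

Definition is_eigenvalue n (M : 'M[R]_n) (mu : R) : Prop :=
  exists v : 'cV[R]_n, v != 0 /\ M *m v = mu *: v.

Definition is_lambda_max n (M : 'M[R]_n) (lam : R) : Prop :=
  is_eigenvalue M lam /\ forall mu, is_eigenvalue M mu -> mu <= lam.

Definition fset_fun (A : 'M[R]_(U, N)) (u : 'cV[R]_N)
    (ER : {set 'I_U * 'I_N}) : R :=
  2 * (\sum_(ij in ER) ((u^T *m A^T *m ebasis ij.1) 0 0 * u ij.2 0))
  - \sum_(i < U) \sum_(j < N | (i, j) \in ER) \sum_(s < N | (i, s) \in ER)
        u j 0 * u s 0.
End Defs.

(* Main.v *)
Require Import Defs.
From mathcomp Require Import all_boot all_order all_algebra.
From mathcomp Require Import ring lra.
Import Order.TTheory GRing.Theory Num.Theory.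
Local Open Scope ring_scope.

Lemma fset_funE (R : realFieldType) (U N : nat) (A : 'M[R]_(U, N))
  (u : 'cV[R]_N) (ER : {set 'I_U * 'I_N}) :
  fset_fun A u ER = \sum_(i < U)
    (2 * (\sum_(j < N) A i j * u j 0) * (\sum_(j < N | (i, j) \in ER) u j 0)
     - (\sum_(j < N | (i, j) \in ER) u j 0) ^+ 2).
Proof.
rewrite /fset_fun sumrB; congr (_ - _); last first.
  apply: eq_bigr => i _; rewrite expr2 big_distrl /=.
  by apply: eq_bigr => j _; rewrite big_distrr.
have -> : \sum_(ij in ER) ((u^T *m A^T *m ebasis R ij.1) 0 0 * u ij.2 0)
  = \sum_(p | xpredT p.1 && ((p.1, p.2) \in ER))
      ((\sum_(k < N) A p.1 k * u k 0) * u p.2 0).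
  apply: eq_big => [[i j]|[i j] _] //=.
  congr (_ * _); rewrite /ebasis !mxE (bigD1 i) //= big1 ?addr0.
    rewrite !mxE eqxx /= mulr1; apply: eq_bigr => k _; rewrite !mxE mulrC.
    done.
  by move=> k /negbTE nk; rewrite !mxE nk mulr0.
rewrite -(pair_big_dep xpredT (fun i j => (i, j) \in ER) (fun i j => (\sum_(k < N) A i k * u k 0) * u j 0)) /= !mulr_sumr; apply: eq_bigr => i _.
by rewrite -mulrA; congr (_ * _); rewrite big_distrr.
Qed.

Theorem lemma3 (R : realFieldType) (U N : nat) (A : 'M[R]_(U, N))
  (u : 'cV[R]_N) (lam : R) :
  is01 A ->
  (u^T *m u) 0 0 = 1 ->
  (forall j, 0 <= u j 0) ->
  is_lambda_max (A^T *m A) lam ->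
  (A^T *m A) *m u = lam *: u ->
  forall ER1 ER2 : {set 'I_U * 'I_N},
    ER1 \subset ER2 -> ER2 \subset edges A ->
    fset_fun A u ER1 <= fset_fun A u ER2.
Proof.
move=> A01 _ u0 _ _ E1 E2 s12 s2.
rewrite !fset_funE; apply: ler_sum => i _.
set w := \sum_(j < N) A i j * u j 0.
set S1 := \sum_(j < N | (i, j) \in E1) u j 0.
set S2 := \sum_(j < N | (i, j) \in E2) u j 0.
have h12 : S1 <= S2.
  rewrite /S1 /S2 [X in X <= _]big_mkcond [X in _ <= X]big_mkcond /=.
  apply: ler_sum => j _.
  case: ifP => h1; first by rewrite (subsetP s12 _ h1).
  by case: ifP => _ //; exact: u0.
have h2w : S2 <= w.
  rewrite /S2 /w big_mkcond /=; apply: ler_sum => j _.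
  case: ifP => h2.
    by move: (subsetP s2 _ h2); rewrite inE /= => /eqP ->; rewrite mul1r.
  by case: (A01 i j) => ->; rewrite ?mul0r ?mul1r.
have h1p : 0 <= S1 by apply: sumr_ge0 => j _; exact: u0.
rewrite -subr_ge0.
have -> : 2 * w * S2 - S2 ^+ 2 - (2 * w * S1 - S1 ^+ 2)
  = (S2 - S1) * ((w - S1) + (w - S2)) by ring.
apply: mulr_ge0; first by rewrite subr_ge0.
by apply: addr_ge0; rewrite subr_ge0 // (le_trans h12 h2w).
Qed.
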